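(* There is a function $f$ such that for all integers $\ell,t,k\ge 1$ and every $\mathcal{O}_k$-free graph $G$ with no $K_{t,t}$ subgraph, the maximum number of pairwise vertex-disjoint cycles of length at most $\ell$ in $G$ is at most $f(\ell,t,k)$.
   Context: All graphs are finite and simple. Two vertex-disjoint subgraphs are independent if there is no edge between them. A graph $G$ is $\mathcal{O}_k$-free if it does not contain $k$ pairwise vertex-disjoint and pairwise independent cycles; equivalently, $G$ has no induced subgraph isomorphic to a disjoint union of $k$ cycles. *)

(* Defs.v *)
(* A finite simple graph is a symmetric irreflexive
   relation e on a finType T. *)
From mathcomp Require Import all_boot.
Set Implicit Arguments. Unset Strict Implicit. Unset Printing Implicit Defensive.

Section Graphs.
Variables (T : finType) (e : rel T).

Definition is_graph_cycle (s : seq T) : bool :=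
  (3 <= size s) && uniq s && path.cycle e s.

Definition no_edge_between (s1 s2 : seq T) : bool :=
  [forall x, [forall y, (x \in s1) ==> (y \in s2) ==> ~~ e x y]].

Definition disjoint_cycles (cs : seq (seq T)) : Prop :=
  all is_graph_cycle cs /\
  pairwise (fun s1 s2 : seq T => [disjoint s1 & s2]) cs.

Definition Ok_free (k : nat) : Prop :=
  ~ exists cs : seq (seq T),
      [/\ size cs = k, all is_graph_cycle cs &
          pairwise (fun s1 s2 : seq T =>
                      [disjoint s1 & s2] && no_edge_between s1 s2) cs].

Definition has_Ktt_subgraph (t : nat) : Prop :=
  exists A B : {set T},
    [/\ #|A| = t, #|B| = t, [disjoint A & B] &
        forall a b, a \in A -> b \in B -> e a b].

End Graphs.

(* Main.v *)
Require Import Defs.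
From mathcomp Require Import all_boot zify.
Set Implicit Arguments. Unset Strict Implicit. Unset Printing Implicit Defensive.

Lemma pigeon (T : eqType) (f : T -> nat) b n (s : seq T) :
  (forall y, y \in s -> f y <= n) -> n.+1 * b <= size s ->
  exists2 c, c <= n & b <= count (fun y => f y == c) s.
Proof.
elim: n s => [|n IH] s Hf Hs.
  exists 0 => //. rewrite (@eq_in_count _ _ predT); last first.
    by move=> y /Hf; rewrite leqn0.
  by rewrite count_predT; lia.
case: (leqP b (count (fun y => f y == n.+1) s)) => Hb.
  by exists n.+1.
have Hsz := count_predC (fun y => f y == n.+1) s.
have H1 : forall y, y \in filter (predC (fun y => f y == n.+1)) s -> f y <= n.
  move=> y; rewrite mem_filter => /andP[/= Hne /Hf]; rewrite leq_eqVlt (negbTE Hne) //.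
have H2 : n.+1 * b <= size (filter (predC (fun y => f y == n.+1)) s).
  rewrite size_filter; nia.
have [c Hc Hcnt] := IH _ H1 H2.
exists c; first by lia.
apply: (leq_trans Hcnt); rewrite count_filter; apply: sub_count => y /= /andP[]//.
Qed.

Lemma pairwise_allQ (T : Type) (Q : pred T) (r : rel T) xs :
  all Q xs -> pairwise r xs -> pairwise (fun x y => Q x && r x y) xs.
Proof.
elim: xs => // x xs IH /andP[Qx Qxs]; rewrite !pairwise_cons => /andP[rx rxs].
rewrite IH // andbT; by apply: sub_all rx => y /= ->; rewrite Qx.
Qed.

Lemma pairwise_allQ2 (T : Type) (Q : pred T) (r : rel T) xs :
  all Q xs -> pairwise r xs -> pairwise (fun x y => [&& Q x, Q y & r x y]) xs.
Proof.
elim: xs => // x xs IH /andP[Qx Qxs]; rewrite !pairwise_cons => /andP[rx rxs].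
rewrite IH // andbT.
elim: xs {IH rxs} Qxs rx => //= y ys IHy /andP[Qy Qys] /andP[rxy rys].
move: (IHy Qys rys); rewrite Qx Qy rxy; exact.
Qed.

Section Ramsey.
Variables (C : nat) (col : nat -> nat -> nat).
Hypothesis colC : forall i j, col i j < C.

Fixpoint B r := if r is r'.+1 then C * B r' + 1 else 0.

Lemma prehom r s : pairwise ltn s -> B r <= size s ->
  exists p : seq (nat * nat), [/\ size p = r, all (fun a => a.1 \in s) p,
    all (fun a => a.2 < C) p &
    pairwise (fun a b => (a.1 < b.1) && (col a.1 b.1 == a.2)) p].
Proof.
elim: r s => [|r IH] s Hs Hsz; first by exists [::].
case: s Hs Hsz => [|x s'] /=; first by lia.
move=> /andP[Hx Hs'] Hsz.
have C0 : 0 < C by have := colC 0 0; lia.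
have H1 : forall y, y \in s' -> col x y <= C.-1.
  by move=> y _; have := colC x y; lia.
have H2 : C.-1.+1 * B r <= size s' by rewrite prednK //; lia.
have [c Hc Hcnt] := pigeon H1 H2.
have [p [Hp1 Hp2 Hp3 Hp4]] := IH (filter (fun y => col x y == c) s') (pairwise_filter _ Hs') ltac:(by rewrite size_filter).
exists ((x, c) :: p); split => /=.
- by rewrite Hp1.
- rewrite in_cons eqxx /=; apply/allP => a Ha.
  by move: (allP Hp2 a Ha); rewrite mem_filter in_cons => /andP[_ ->]; rewrite orbT.
- by rewrite Hp3 andbT; lia.
- rewrite Hp4 andbT; apply/allP => a Ha /=.
  move: (allP Hp2 a Ha); rewrite mem_filter => /andP[-> H] /=.
  by rewrite andbT; apply: (allP Hx).
Qed.

Lemma ramsey m s : pairwise ltn s -> B (C * m) <= size s ->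
  exists c q, [/\ pairwise (fun i j => (i < j) && (col i j == c)) q,
     size q = m & all (fun i => i \in s) q].
Proof.
move=> Hs Hsz.
have [p [Hp1 Hp2 Hp3 Hp4]] := prehom Hs Hsz.
have C0 : 0 < C by have := colC 0 0; lia.
have H1 : forall a, a \in p -> a.2 <= C.-1.
  by move=> a Ha; have := allP Hp3 a Ha; simpl; lia.
have H2 : C.-1.+1 * m <= size p by rewrite prednK //; lia.
have [c Hc Hcnt] := pigeon H1 H2.
set q' := filter (fun a => a.2 == c) p.
have Hq' : pairwise (fun i j => (i < j) && (col i j == c)) (map fst q').
  rewrite pairwise_map.
  have := pairwise_allQ (filter_all (fun a => a.2 == c) p) (pairwise_filter (fun a => a.2 == c) Hp4).
  apply: sub_pairwise => a b /= /andP[/eqP <-] //.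
exists c, (take m (map fst q')); split.
- by move: Hq'; rewrite -{1}(cat_take_drop m (map fst q')) pairwise_cat => /and3P[].
- by rewrite size_take size_map size_filter; apply/minn_idPl.
- apply/allP => i /mem_take /mapP [a Ha ->].
  by move: Ha; rewrite mem_filter => /andP[_ /(allP Hp2)].
Qed.
End Ramsey.
Section Main.
Variables (T : finType) (e : rel T) (cs : seq (seq T)) (l : nat).
Hypothesis Hdc : disjoint_cycles e cs.
Hypothesis Hsz : all (fun s => size s <= l) cs.

Definition cyc i := nth [::] cs i.

Definition col i j :=
  if [pick xy : T * T | (xy.1 \in cyc i) && (xy.2 \in cyc j) && e xy.1 xy.2]
    is Some xy then (index xy.1 (cyc i) * l + index xy.2 (cyc j)).+1 else 0.

Lemma cyc_in i x : x \in cyc i -> i < size cs.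
Proof. by rewrite /cyc; case: (ltnP i (size cs)) => // H; rewrite nth_default. Qed.

Lemma index_lt i x : x \in cyc i -> index x (cyc i) < l.
Proof.
move=> Hx; have Hi := cyc_in Hx.
have := allP Hsz _ (mem_nth [::] Hi); rewrite -/(cyc i) => H.
by apply: leq_trans H; rewrite index_mem.
Qed.

Lemma colC i j : col i j < l * l + 1.
Proof.
rewrite /col; case: pickP => [[x y] /= /andP[/andP[Hx Hy] _]|_]; last by rewrite addn1.
have := index_lt Hx; have := index_lt Hy; nia.
Qed.

Lemma col0 i j : col i j = 0 -> no_edge_between e (cyc i) (cyc j).
Proof.
rewrite /col; case: pickP => [[x y] //|H _].
apply/forallP => x; apply/forallP => y; apply/implyP => Hx; apply/implyP => Hy.
by have := H (x, y); rewrite /= Hx Hy /= => ->.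
Qed.

Lemma colS i j c : col i j = c.+1 -> 0 < l ->
  exists x y, [/\ x \in cyc i, y \in cyc j, e x y,
     index x (cyc i) = c %/ l & index y (cyc j) = c %% l].
Proof.
rewrite /col; case: pickP => [[x y] /= /andP[/andP[Hx Hy] Hxy]|//] [<-] Hl.
exists x, y; split => //.
  by rewrite divnMDl // divn_small ?addn0 // index_lt.
by rewrite modnMDl modn_small // index_lt.
Qed.

Lemma disj i j x : i != j -> x \in cyc i -> x \in cyc j -> False.
Proof.
move=> Hij Hi Hj; have Hi' := cyc_in Hi; have Hj' := cyc_in Hj.
have Hp := pairwiseP [::] (proj2 Hdc).
wlog Hlt : i j Hij Hi Hj Hi' Hj' / i < j.
  move=> W; case: (ltngtP i j) => H; [exact: (W i j)| | by rewrite H eqxx in Hij].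
  by apply: (W j i) => //; rewrite eq_sym.
have := Hp i j Hi' Hj' Hlt; rewrite -/(cyc i) -/(cyc j) => D.
by rewrite (disjointFr D Hi) in Hj.
Qed.

End Main.

Theorem mainTheorem6 :
  exists f : nat -> nat -> nat -> nat,
    forall l t k : nat, 1 <= l -> 1 <= t -> 1 <= k ->
    forall (T : finType) (e : rel T),
      symmetric e -> irreflexive e ->
      Ok_free e k -> ~ has_Ktt_subgraph e t ->
      forall cs : seq (seq T),
        disjoint_cycles e cs -> all (fun s => size s <= l) cs ->
        size cs <= f l t k.
Proof.
exists (fun l t k => B (l * l + 1) ((l * l + 1) * (k + 2 * t))).
move=> l t k Hl Ht Hk T e Hsym Hirr Hok HnK cs Hdc Hsz.
rewrite leqNgt; apply/negP => Hbig.
have Hpi : pairwise ltn (iota 0 (size cs)).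
  by rewrite -sorted_pairwise ?iota_ltn_sorted //; exact: ltn_trans.
have [c [q [Hq Hqs Hqin]]] := ramsey (@colC T e cs l Hsz) Hpi
   (ltac:(rewrite size_iota; exact: ltnW) : B (l * l + 1) ((l * l + 1) * (k + 2 * t)) <= size (iota 0 (size cs))).
have Hqlt : forall i, i \in q -> i < size cs.
  by move=> i /(allP Hqin); rewrite mem_iota.
case: c Hq => [|c] Hq.
  apply: Hok; exists (map (cyc cs) (take k q)); split.
  - by rewrite size_map size_take; apply/minn_idPl; rewrite Hqs leq_addr.
  - apply/allP => C /mapP [i /mem_take Hi ->].
    exact: (allP (proj1 Hdc)) _ (mem_nth [::] (Hqlt i Hi)).
  - rewrite pairwise_map.
    have Hq1 : pairwise (fun i j => (i < j) && (col e cs l i j == 0)) (take k q).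
      by move: Hq; rewrite -{1}(cat_take_drop k q) pairwise_cat => /and3P[].
    have Hall : all (fun i => i < size cs) (take k q).
      by apply/allP => i /mem_take /Hqlt.
    have := pairwise_allQ2 Hall Hq1.
    apply: sub_pairwise => i j /= /and3P[Hi Hj /andP[Hij /eqP H0]].
    rewrite (col0 H0) andbT.
    exact: (pairwiseP [::] (proj2 Hdc)) i j Hi Hj Hij.
have Hl0 : 0 < l by [].
have Hall : all (fun i => i < size cs) q by apply/allP => i /Hqlt.
have Hq2 := pairwise_allQ2 Hall Hq.
have [x0 _] : exists x0 : T, True.
  have := (pairwiseP 0 Hq) 0 1 ltac:(rewrite inE Hqs; lia) ltac:(rewrite inE Hqs; lia) isT.
  move=> /andP[_ /eqP H].
  by have [x [y [Hx _ _ _ _]]] := colS Hsz H Hl0; exists x.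
pose F i := nth x0 (cyc cs i) (c %/ l).
pose G j := nth x0 (cyc cs j) (c %% l).
have HR : pairwise (fun i j => [&& i < j, e (F i) (G j), F i \in cyc cs i & G j \in cyc cs j]) q.
  apply: sub_pairwise Hq => i j /andP[Hij /eqP Hc].
  have [x [y [Hx Hy Hxy Ha Hb]]] := colS Hsz Hc Hl0.
  by rewrite /F /G -Ha -Hb !nth_index // Hij Hxy Hx Hy.
set q1 := take t q; set q' := drop t q; set q2 := take t q'.
have := HR; rewrite -(cat_take_drop t q) pairwise_cat -/q1 -/q' => /and3P[HA H1 H'].
have Hsq' : size q' = k + t by rewrite size_drop Hqs; lia.
have Hsq1 : size q1 = t by rewrite size_take Hqs; apply/minn_idPl; lia.
have Hsq2 : size q2 = t by rewrite size_take Hsq'; apply/minn_idPl; lia.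
have HFin : forall i, i \in q1 -> F i \in cyc cs i.
  move=> i Hi; have Hj : nth 0 q' 0 \in q' by apply: mem_nth; rewrite ?Hsq' ?Hsq1; lia.
  by have := allrelP HA i _ Hi Hj => /and4P[].
have HGin : forall j, j \in q2 -> G j \in cyc cs j.
  move=> j Hj; have Hi : nth 0 q1 0 \in q1 by apply: mem_nth; rewrite ?Hsq' ?Hsq1; lia.
  by have := allrelP HA _ j Hi (mem_take Hj) => /and4P[].
have Hlt : forall i j, i \in q1 -> j \in q2 -> (i < j) && e (F i) (G j).
  by move=> i j Hi Hj; have := allrelP HA i j Hi (mem_take Hj) => /and4P[-> ->].
have Hu1 : uniq q1.
  apply: (pairwise_uniq (r := ltn)) => //; first exact: ltnn.
  by apply: sub_pairwise H1 => i j /andP[].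
have Hu2 : uniq q2.
  apply: (pairwise_uniq (r := ltn)) => //; first exact: ltnn.
  have : pairwise ltn q' by apply: sub_pairwise H' => i j /andP[].
  by rewrite -{1}(cat_take_drop t q') pairwise_cat => /and3P[].
apply: HnK; exists [set x in map F q1], [set x in map G q2]; split.
- have U : uniq (map F q1).
    rewrite map_inj_in_uniq // => i j Hi Hj E; apply/eqP; apply/negPn/negP => Hij.
    by apply: (disj Hdc Hij (HFin i Hi)); rewrite E; apply: HFin.
  by rewrite cardsE; move/card_uniqP: U => ->; rewrite size_map.
- have U : uniq (map G q2).
    rewrite map_inj_in_uniq // => i j Hi Hj E; apply/eqP; apply/negPn/negP => Hij.
    by apply: (disj Hdc Hij (HGin i Hi)); rewrite E; apply: HGin.
  by rewrite cardsE; move/card_uniqP: U => ->; rewrite size_map.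
- rewrite disjoint_subset; apply/subsetP => x; rewrite !inE => /mapP[i Hi ->].
  apply/negP => /mapP[j Hj E].
  have /andP[Hij _] := Hlt i j Hi Hj.
  have Hne : i != j by rewrite neq_ltn Hij.
  by apply: (disj Hdc Hne (HFin i Hi)); rewrite E; apply: HGin.
- move=> a b; rewrite !inE => /mapP[i Hi ->] /mapP[j Hj ->].
  by have /andP[_ ->] := Hlt i j Hi Hj.
Qed.
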